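(* Let $k, n \in \mathbb{N}$ with $k \le 2n$. Color every edge of the complete bipartite graph $K_{2n,2n}$ either red or blue in such a way that every vertex is incident with exactly $n$ red edges and exactly $n$ blue edges. Then $K_{2n,2n}$ has a perfect matching consisting of exactly $k$ red edges and $2n-k$ blue edges, unless $k$ is odd and the graph of blue edges is isomorphic to $K_{n,n} \cup K_{n,n}$ (the disjoint union of two copies of $K_{n,n}$).
   Context: The graph of blue edges is the spanning subgraph of $K_{2n,2n}$ on all $4n$ vertices whose edge set is the set of blue edges. *)

(* Defs.v *)
From mathcomp Require Import all_boot all_fingroup.
Set Implicit Arguments. Unset Strict Implicit. Unset Printing Implicit Defensive.

(* A red/blue colouring of K_{2n,2n}: left vertices 'I_(2n), right vertices
   'I_(2n); [col i j = true] iff the edge {left i, right j} is RED,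
   [col i j = false] iff it is BLUE. *)
Definition coloring (n : nat) := 'I_(2 * n) -> 'I_(2 * n) -> bool.

Definition balanced (n : nat) (col : coloring n) : Prop :=
  (forall i : 'I_(2 * n), #|[set j | col i j]| = n /\ #|[set j | ~~ col i j]| = n) /\
  (forall j : 'I_(2 * n), #|[set i | col i j]| = n /\ #|[set i | ~~ col i j]| = n).

Definition KV (n : nat) : finType := ('I_(2 * n) + 'I_(2 * n))%type.

Definition blue_adj (n : nat) (col : coloring n) (x y : KV n) : bool :=
  match x, y with
  | inl i, inr j => ~~ col i j
  | inr j, inl i => ~~ col i j
  | _, _ => false
  end.

(* K_{n,n} ∪ K_{n,n}: vertices (b, inl a) / (b, inr a), b : bool selecting the
   copy; adjacent iff same copy and opposite sides. *)
Definition TV (n : nat) : finType := (bool * ('I_n + 'I_n))%type.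

Definition twoKnn_adj (n : nat) (x y : TV n) : bool :=
  (x.1 == y.1) &&
  match x.2, y.2 with
  | inl _, inr _ => true
  | inr _, inl _ => true
  | _, _ => false
  end.

Definition blue_iso_twoKnn (n : nat) (col : coloring n) : Prop :=
  exists f : KV n -> TV n, bijective f /\
    forall x y : KV n, twoKnn_adj (f x) (f y) = blue_adj col x y.

(* a perfect matching of K_{2n,2n} is a bijection s (left i matched to right s i);
   its number of red edges *)
Definition red_count (n : nat) (col : coloring n) (s : 'S_(2 * n)) : nat :=
  #|[set i | col i (s i)]|.

Definition blue_count (n : nat) (col : coloring n) (s : 'S_(2 * n)) : nat :=
  #|[set i | ~~ col i (s i)]|.

(* Main.v *)
Require Import Defs.
From mathcomp Require Import all_boot all_fingroup zify.
Set Implicit Arguments. Unset Strict Implicit. Unset Printing Implicit Defensive.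

Lemma card_sumb (T : finType) (P : pred T) : #|[set x | P x]| = \sum_x (P x : nat).
Proof.
rewrite -sum1_card big_mkcond /=; apply: eq_bigr => x _; rewrite inE; by case: (P x).
Qed.

Definition rc n (N : coloring n) (p : 'S_(2 * n)) := \sum_i (N i (p i) : nat).

Lemma next_inj (T : eqType) (s : seq T) : uniq s -> injective (next s).
Proof. move=> u; exact: (can_inj (prev_next u)). Qed.

Definition cyc n (s : seq 'I_(2 * n)) (u : uniq s) : 'S_(2 * n) := perm (next_inj u).

Lemma rc_cyc n (N : coloring n) (s : seq 'I_(2 * n)) (u : uniq s) :
  rc N (cyc u) + \sum_(x <- s) (N x x : nat) = rc N 1%g + \sum_(x <- s) (N x (next s x) : nat).
Proof.
rewrite /rc (bigID (fun i => i \in s)) /= [in RHS](bigID (fun i => i \in s)) /=.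
rewrite !big_uniq //.
have E1 : \sum_(i | i \notin s) (N i (cyc u i) : nat) = \sum_(i | i \notin s) (N i ((1%g : 'S_(2*n)) i) : nat).
  apply: eq_bigr => i /negbTE Hi; rewrite perm1 permE next_nth Hi //.
have E2 : \sum_(i in s) (N i (cyc u i) : nat) = \sum_(i in s) (N i (next s i) : nat).
  by apply: eq_bigr => i _; rewrite permE.
have E3 : \sum_(i in s) (N i ((1%g : 'S_(2*n)) i) : nat) = \sum_(i in s) (N i i : nat).
  by apply: eq_bigr => i _; rewrite perm1.
rewrite E1 E2 E3.
have H : forall a b c a' b' c' : nat, a = a' -> b = b' -> c = c' -> a + b + c = c' + b' + a' by move=> *; lia.
by apply: H.
Qed.

Section Core.
Variables (n : nat) (N : coloring n).
Hypothesis Hno : forall p : 'S_(2*n), rc N p != (rc N 1%g).+1.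

Lemma cyc_cond s (u : uniq s) :
  \sum_(x <- s) (N x (next s x):nat) != (\sum_(x <- s) (N x x : nat)).+1.
Proof.
have := rc_cyc N u; have := Hno (cyc u); move=> H1 H2; apply/negP => /eqP E.
rewrite E in H2; move/negP: H1; apply; apply/eqP; rewrite addnS -addSn in H2; exact: (addIn H2).
Qed.

Lemma c2 x y : x != y -> N x y + N y x != (N x x + N y y).+1.
Proof.
move=> xy; have yx : (y == x) = false by rewrite eq_sym; apply/negbTE.
have u : uniq [:: x; y] by rewrite /= inE xy.
have := cyc_cond u; rewrite !big_cons !big_nil /= !eqxx yx.
by rewrite !addn0.
Qed.

Lemma c3 x y z : x != y -> x != z -> y != z ->
  N x y + N y z + N z x != (N x x + N y y + N z z).+1.
Proof.
move=> xy xz yz.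
have yx : (y == x) = false by rewrite eq_sym; apply/negbTE.
have zx : (z == x) = false by rewrite eq_sym; apply/negbTE.
have zy : (z == y) = false by rewrite eq_sym; apply/negbTE.
have u : uniq [:: x; y; z] by rewrite /= !inE !negb_or xy xz yz.
have := cyc_cond u; rewrite !big_cons !big_nil /= !eqxx yx zx zy.
by rewrite !addn0 !addnA.
Qed.

Lemma c4 x y z w : x != y -> x != z -> x != w -> y != z -> y != w -> z != w ->
  N x y + N y z + N z w + N w x != (N x x + N y y + N z z + N w w).+1.
Proof.
move=> xy xz xw yz yw zw.
have yx : (y == x) = false by rewrite eq_sym; apply/negbTE.
have zx : (z == x) = false by rewrite eq_sym; apply/negbTE.
have zy : (z == y) = false by rewrite eq_sym; apply/negbTE.
have wx : (w == x) = false by rewrite eq_sym; apply/negbTE.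
have wy : (w == y) = false by rewrite eq_sym; apply/negbTE.
have wz : (w == z) = false by rewrite eq_sym; apply/negbTE.
have u : uniq [:: x; y; z; w] by rewrite /= !inE !negb_or xy xz xw yz yw zw.
have := cyc_cond u; rewrite !big_cons !big_nil /= !eqxx yx zx zy wx wy wz.
by rewrite !addn0 !addnA.
Qed.

End Core.

Lemma sum_const_ord k c : \sum_(i < k) c = k * c.
Proof. by rewrite sum_nat_const card_ord. Qed.

Lemma S1 k (x : 'I_k -> nat) l0 : (forall l, x l <= 1) -> x l0 = 0 -> \sum_l x l < k.
Proof.
move=> H0 H1.
have : \sum_l x l < \sum_(l < k) 1.
  rewrite (bigD1 l0) //= [X in _ < X](bigD1 l0) //= H1 add0n add1n ltnS.
  by apply: leq_sum => l _; apply: H0.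
by rewrite sum_const_ord muln1.
Qed.

Lemma S2 k (x : 'I_k -> nat) : (forall l, x l <= 1) -> \sum_l x l = k -> forall l, x l = 1.
Proof.
move=> H0 H1 l; have := H0 l; case E: (x l) => [|[|]] // _.
by have := S1 H0 E; rewrite H1 ltnn.
Qed.

Section Core2.
Variables (n : nat) (N : coloring n).
Hypothesis Hrow : forall i, \sum_j (N i j : nat) = n.
Hypothesis Hcol : forall j, \sum_i (N i j : nat) = n.
Hypothesis Hno : forall p : 'S_(2*n), rc N p != (rc N 1%g).+1.

Ltac bcase := repeat match goal with |- context[N ?a ?b] => case: (N a b) end.

Let c2 := c2 Hno.
Let c3 := c3 Hno.
Let c4 := c4 Hno.

Lemma neqd x y : N x x = true -> N y y = false -> x != y.
Proof. by move=> hx hy; apply/eqP => E; rewrite E hy in hx. Qed.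

Lemma F1 x y : N x x = false -> N y y = false -> N x y = N y x.
Proof.
move=> hx hy; case: (eqVneq x y) => [->//|xy].
move: (c2 xy); rewrite hx hy; bcase; done.
Qed.

Lemma NoTri3 x y z : N x x = false -> N y y = false -> N z z = false ->
  x != y -> x != z -> y != z -> N x y -> N y z -> N x z -> False.
Proof.
move=> hx hy hz xy xz yz exy eyz exz.
have eyx : N y x by rewrite (F1 hy hx).
have ezy : N z y by rewrite (F1 hz hy).
have ezx : N z x by rewrite (F1 hz hx).
case: (boolP [exists i, N i i]) => [/existsP [i hi]|].
  have ix := neqd hi hx; have iy := neqd hi hy; have iz := neqd hi hz.
  have zy : z != y by rewrite eq_sym. have zx : z != x by rewrite eq_sym.
  move: (c3 ix iy xy) (c3 iz iy zy) (c3 iz ix zx) (c3 ix iz xz)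
        (c2 ix) (c4 ix iy iz xy xz yz).
  rewrite ?hi ?hx ?hy ?hz ?exy ?eyz ?exz ?eyx ?ezy ?ezx; bcase; done.
rewrite negb_exists => /forallP hall.
have hd l : N l l = false by apply/negbTE/hall.
have H2 l : 2 <= N x l + N y l + N z l.
  case: (eqVneq l x) => [->|lx]; first by rewrite hx eyx ezx.
  case: (eqVneq l y) => [->|ly]; first by rewrite hy exy ezy.
  case: (eqVneq l z) => [->|lz]; first by rewrite hz exz eyz.
  have xl : x != l by rewrite eq_sym. have yl : y != l by rewrite eq_sym.
  move: (c3 xl xy ly) (c3 xl xz lz) (c3 yl yz lz).
  rewrite ?(F1 (hd l) hy) ?(F1 (hd l) hz) ?(F1 (hd l) hx) !hd ?exy ?eyz ?exz ?eyx ?ezx ?ezy; bcase; done.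
have : \sum_(l < 2 * n) 2 <= \sum_l (N x l + N y l + N z l : nat).
  by apply: leq_sum => l _; apply: H2.
rewrite sum_const_ord !big_split /= !Hrow.
have : 0 < 2 * n by case: (x) => /= xv; lia.
lia.
Qed.


Lemma core g : N g g = false ->
  (exists p, rc N p = (rc N 1%g).+2) /\ (forall i j, N i j = (N i g != N g j)).
Proof.
move=> hg.
have [h /andP [egh ehg]] : exists h, N g h && N h g.
  case: (boolP [exists h, N g h && N h g]) => [/existsP //|].
  rewrite negb_exists => /forallP H; exfalso.
  have H1 l : N g l + N l g <= 1 by move: (H l); case: (N g l); case: (N l g).
  have := S1 H1 (_ : N g g + N g g = 0); rewrite hg => /(_ erefl).
  by rewrite big_split /= Hrow Hcol addnn -mul2n ltnn.
have hh : N h h = false.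
  apply/negP => hh; have hgn := neqd hh hg; move: (c2 hgn); by rewrite hh hg egh ehg.
have gh : g != h by apply/eqP => E; move: egh; rewrite -E hg.
have hgn : h != g by rewrite eq_sym.
have K : forall j, N g j + N h j = 1.
  apply: S2; last by rewrite big_split /= !Hrow addnn -mul2n.
  move=> j; case: (eqVneq j g) => [->|jg]; first by rewrite hg ehg.
  case: (eqVneq j h) => [->|jh]; first by rewrite hh egh.
  case hj: (N j j).
    have jg' := neqd hj hg; have jh' := neqd hj hh.
    move: (c2 jg') (c3 jg' jh' gh); rewrite hj hg hh ?egh ?ehg; bcase; done.
  have gj : g != j by rewrite eq_sym. have hj' : h != j by rewrite eq_sym.
  apply/negPn/negP; rewrite -ltnNge; case E1: (N g j); case E2: (N h j) => //= _.
  exact: (NoTri3 hg hh hj gh gj hj' egh E2 E1).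
split.
  have u : uniq [:: g; h] by rewrite /= inE gh.
  exists (cyc u); have := rc_cyc N u; rewrite !big_cons /= !eqxx (negbTE hgn) hg hh egh ehg.
  by rewrite !big_nil; lia.
have Kb j : N h j = ~~ N g j by move: (K j); case: (N h j); case: (N g j).
move=> i j.
case hi: (N i i); case hj: (N j j).
-
  have ig := neqd hi hg; have ih := neqd hi hh; have jg := neqd hj hg; have jh := neqd hj hh.
  move: (c3 ig ih gh) (c3 jg jh gh) (c3 jh jg hgn); rewrite ?hi ?hj ?hg ?hh ?egh ?ehg ?Kb.
  case: (eqVneq i j) => [<-|ij]; first by rewrite hi; bcase; done.
  move: (c3 ij ih jh) (c3 ij ig jg) (c4 ij ig ih jg jh gh) (c4 ij ih ig jh jg hgn).
  rewrite ?hi ?hj ?hg ?hh ?egh ?ehg ?Kb; bcase; done.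
-
  have ig := neqd hi hg; have ih := neqd hi hh.
  case: (eqVneq j g) => [->|jg]; first by rewrite hg; bcase.
  case: (eqVneq j h) => [->|jh].
    move: (c3 ig ih gh) (c3 ih ig hgn); rewrite ?hi ?hg ?hh ?egh ?ehg ?Kb; bcase; done.
  have ij := neqd hi hj.
  move: (c3 ij ig jg) (c3 ij ih jh) (c3 ig ih gh) (F1 hj hg) (F1 hj hh).
  rewrite ?hi ?hj ?hg ?hh ?egh ?ehg ?Kb; bcase; done.
-
  have jg := neqd hj hg; have jh := neqd hj hh.
  case: (eqVneq i g) => [->|ig]; first by rewrite hg; bcase.
  case: (eqVneq i h) => [->|ih]; first by rewrite Kb ehg.
  have ji := neqd hj hi.
  have gi : g != i by rewrite eq_sym. have hi' : h != i by rewrite eq_sym.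
  move: (c3 jg ji gi) (c3 jg jh gh) (c3 jh ji hi') (c3 jh jg hgn) (F1 hi hg) (F1 hi hh) (K i).
  rewrite ?hi ?hj ?hg ?hh ?egh ?ehg ?Kb; bcase; done.
-
  case: (eqVneq i j) => [<-|ij]; first by rewrite hi (F1 hi hg); case: (N g i).
  case: (eqVneq i g) => [->|ig]; first by rewrite hg; bcase.
  case: (eqVneq j g) => [->|jg]; first by rewrite hg; case: (N i g).
  have nt : ~~ [&& N i j, N j g & N i g].
    apply/negP => /and3P [a b c]; exact: (NoTri3 hi hj hg ij ig jg a b c).
  move: nt (c3 ij ig jg) (F1 hi hg) (F1 hj hg); rewrite hi hj hg; bcase; done.
Qed.

End Core2.

Definition exc n (col : coloring n) :=
  exists a c : 'I_(2 * n) -> bool, forall i j, col i j = (a i != c j).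

Lemma red_rc n (col : coloring n) s : red_count col s = rc col s.
Proof. by rewrite /red_count (@card_sumb _ (fun i => col i (s i))). Qed.

Lemma bal_rows n (col : coloring n) : balanced col ->
  (forall i, \sum_j (col i j : nat) = n) /\ (forall j, \sum_i (col i j : nat) = n).
Proof.
by case=> H1 H2; split=> x; rewrite -card_sumb; [case: (H1 x) | case: (H2 x)].
Qed.

Lemma step n (col : coloring n) (s : 'S_(2 * n)) : balanced col ->
  red_count col s < 2 * n ->
  (exists t, red_count col t = (red_count col s).+1) \/
  ((exists t, red_count col t = (red_count col s).+2) /\ exc col).
Proof.
move=> /bal_rows [Hr Hc] Hlt.
pose N : coloring n := fun i j => col i (s j).
have rcN p : rc N p = red_count col (p * s)%g.
  by rewrite red_rc /rc; apply: eq_bigr => i _; rewrite permM.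
have rcN1 : rc N 1%g = red_count col s by rewrite rcN mul1g.
have HrN i : \sum_j (N i j : nat) = n.
  rewrite -[RHS](Hr i); exact: esym (reindex_inj (@perm_inj _ s)).
have HcN j : \sum_i (N i j : nat) = n by apply: Hc.
have [g hg] : exists g, N g g = false.
  case: (boolP [exists g, ~~ N g g]) => [/existsP [g /negbTE hg]|]; first by exists g.
  rewrite negb_exists => /forallP H; exfalso.
  move: Hlt; rewrite -rcN1 /rc.
  have -> : \sum_i (N i ((1%g : 'S_(2 * n)) i) : nat) = \sum_(i < 2 * n) 1.
    by apply: eq_bigr => i _; rewrite perm1; move: (H i); case: (N i i).
  by rewrite sum_const_ord muln1 ltnn.
case: (boolP [exists p, rc N p == (rc N 1%g).+1]) => [/existsP [p /eqP hp]|].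
  by left; exists (p * s)%g; rewrite -rcN hp rcN1.
rewrite negb_exists => /forallP Hno.
have [[p hp] hx] := core HrN HcN Hno hg.
right; split; first by exists (p * s)%g; rewrite -rcN hp rcN1.
exists (fun i => N i g), (fun j => N g (s^-1 j)%g) => i j.
by rewrite -hx /N permKV.
Qed.

Lemma sum_ne n (b : bool) (c : 'I_(2 * n) -> bool) :
  \sum_j ((b != c j) : nat) = n -> \sum_j (c j : nat) = n.
Proof.
case: b => H; last by rewrite -[RHS]H; apply: eq_bigr => j _; case: (c j).
have E : \sum_j (c j : nat) + \sum_j ((true != c j) : nat) = 2 * n.
  rewrite -big_split /=; transitivity (\sum_(j < 2 * n) 1).
    by apply: eq_bigr => j _; case: (c j).
  by rewrite sum_const_ord muln1.
by move: E; rewrite H; lia.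
Qed.

Lemma exc_sums n (col : coloring n) : balanced col -> 0 < n ->
  forall a c : 'I_(2 * n) -> bool, (forall i j, col i j = (a i != c j)) ->
  \sum_i (a i : nat) = n /\ \sum_j (c j : nat) = n.
Proof.
move=> /bal_rows [Hr Hc] npos a c hx.
have i0 : 'I_(2 * n) by exists 0; lia.
split.
  apply: (@sum_ne n (c i0)); rewrite -[RHS](Hc i0); apply: eq_bigr => i _.
  by rewrite hx eq_sym.
apply: (@sum_ne n (a i0)); rewrite -[RHS](Hr i0); apply: eq_bigr => j _; by rewrite hx.
Qed.

Lemma exc_even n (col : coloring n) : balanced col -> exc col ->
  forall s, ~~ odd (red_count col s).
Proof.
move=> hb [a [c hx]] s.
case: (posnP n) => [n0|npos].
  have := max_card [set i | col i (s i)]; rewrite card_ord => H1.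
  have H2 : red_count col s = 0 by rewrite /red_count; lia.
  by rewrite H2.
have [Sa Sc] := exc_sums hb npos hx.
have Sc' : \sum_i (c (s i) : nat) = n.
  by rewrite -[RHS]Sc; exact: esym (reindex_inj (@perm_inj _ s)).
have E : red_count col s + 2 * \sum_i ((a i && c (s i)) : nat) = n + n.
  transitivity (\sum_i (a i : nat) + \sum_i (c (s i) : nat)); last by rewrite Sa Sc'.
  rewrite red_rc /rc big_distrr /= -!big_split /=.
  by apply: eq_bigr => i _; rewrite hx; case: (a i); case: (c (s i)).
have := congr1 odd E; rewrite oddD oddM /= addnn odd_double.
by case: (odd _).
Qed.

Definition compl n (col : coloring n) : coloring n := fun i j => ~~ col i j.

Lemma compl_bal n (col : coloring n) : balanced col -> balanced (compl col).
Proof.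
case=> H1 H2; split=> x.
  have -> : [set j | compl col x j] = [set j | ~~ col x j] by [].
  have -> : [set j | ~~ compl col x j] = [set j | col x j] by apply/setP => j; rewrite !inE negbK.
  by case: (H1 x).
have -> : [set i | compl col i x] = [set i | ~~ col i x] by [].
have -> : [set i | ~~ compl col i x] = [set i | col i x] by apply/setP => j; rewrite !inE negbK.
by case: (H2 x).
Qed.

Lemma red_blue n (col : coloring n) s : red_count col s + blue_count col s = 2 * n.
Proof.
rewrite /red_count /blue_count -[RHS]card_ord -(cardsC [set i | col i (s i)]).
congr (_ + _); apply: eq_card => i; by rewrite !inE.
Qed.

Lemma red_compl n (col : coloring n) s : red_count (compl col) s = 2 * n - red_count col s.
Proof. by rewrite -(red_blue col s) addKn. Qed.

Lemma exc_compl n (col : coloring n) : exc col -> exc (compl col).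
Proof.
case=> a [c hx]; exists a, (fun j => ~~ c j) => i j; rewrite /compl hx.
by case: (a i); case: (c j).
Qed.

Lemma exc_compl' n (col : coloring n) : exc (compl col) -> exc col.
Proof.
case=> a [c hx]; exists a, (fun j => ~~ c j) => i j.
have := hx i j; rewrite /compl; case: (col i j); case: (a i); case: (c j) => //.
Qed.

Lemma iso_exc n (col : coloring n) : blue_iso_twoKnn col -> exc col.
Proof.
case: n col => [|n'] col.
  by move=> _; exists (fun _ => false), (fun _ => false) => -[i hi].
move=> [f [[g fK gK] hadj]].
exists (fun i => (f (inl i)).1), (fun j => (f (inr j)).1) => i j.
have := hadj (inl i) (inr j); rewrite /=.
case Ex: (f (inl i)) => [b1 [p|p]]; case Ey: (f (inr j)) => [b2 [q|q]];
  rewrite /twoKnn_adj /= ?andbT ?andbF. all: try (by move=> E; rewrite -(negbK (col i j)) -E).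
- move=> E0; have -> : col i j by rewrite -(negbK (col i j)) -E0.
  case: (eqVneq b1 b2) => [E|//].
  exfalso; set v := g (b1, inr ord0).
  have h1 := hadj v (inl i); have h2 := hadj v (inr j).
  rewrite /v gK Ex Ey -E /twoKnn_adj /= eqxx in h1 h2.
  by move: h1 h2; case: (g _).
- move=> E0; have -> : col i j by rewrite -(negbK (col i j)) -E0.
  case: (eqVneq b1 b2) => [E|//].
  exfalso; set v := g (b1, inl ord0).
  have h1 := hadj v (inl i); have h2 := hadj v (inr j).
  rewrite /v gK Ex Ey -E /twoKnn_adj /= eqxx in h1 h2.
  by move: h1 h2; case: (g _).
Qed.

Lemma cardb (T : finType) (d : T -> bool) x0 k :
  #|[set t | d t == x0]| = k -> #|[set t | d t == ~~ x0]| = k -> forall b, #|[set t | d t == b]| = k.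
Proof. by move=> H1 H2 b; case: (eqVneq b x0) => [->//|]; case: b x0 H1 H2 => -[]. Qed.

Definition rk n' (A : {set 'I_(2 * n'.+1)}) x : 'I_n'.+1 := inord (index x (enum A)).

Lemma rk_inj n' (A : {set 'I_(2 * n'.+1)}) x y : #|A| = n'.+1 -> x \in A -> y \in A ->
  rk A x = rk A y -> x = y.
Proof.
move=> cA xA yA /(congr1 val) /=.
have lt z : z \in A -> index z (enum A) < n'.+1.
  move=> zA; have := index_mem z (enum A); rewrite mem_enum zA -cardE cA; exact.
rewrite !inordK ?lt // => E.
rewrite -(nth_index x (_ : x \in enum A)) ?mem_enum // E nth_index // mem_enum //.
Qed.

Lemma exc_iso n (col : coloring n) : balanced col -> exc col -> blue_iso_twoKnn col.
Proof.
case: n col => [|n'] col.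
  move=> _ _.
  exists (fun x => match x with inl i => (true, inl (cast_ord (muln0 2) i))
                           | inr i => (true, inl (cast_ord (muln0 2) i)) end).
  have e : KV 0 -> False by case=> [[i hi]|[i hi]]; move: hi; rewrite muln0.
  split; last by move=> x; case: (e x).
  apply: inj_card_bij; first by move=> x; case: (e x).
  rewrite /TV /KV. rewrite card_prod !card_sum !card_ord. by rewrite muln0.
move=> [Hr Hc] [a [c hx]].
have i0 : 'I_(2 * n'.+1) by exists 0; lia.
have ca : forall b, #|[set i | a i == b]| = n'.+1.
  apply: (@cardb _ a (c i0)).
    have [_ H] := Hc i0; rewrite -[RHS]H; apply: eq_card => i; rewrite !inE hx; by case: (a i); case: (c i0).
  have [H _] := Hc i0; rewrite -[RHS]H; apply: eq_card => i; rewrite !inE hx; by case: (a i); case: (c i0).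
have cc : forall b, #|[set j | c j == b]| = n'.+1.
  apply: (@cardb _ c (a i0)).
    have [_ H] := Hr i0; rewrite -[RHS]H; apply: eq_card => j; rewrite !inE hx; by case: (a i0); case: (c j).
  have [H _] := Hr i0; rewrite -[RHS]H; apply: eq_card => j; rewrite !inE hx; by case: (a i0); case: (c j).
pose F (x : KV n'.+1) : TV n'.+1 := match x with
  | inl i => (a i, inl (rk [set i' | a i' == a i] i))
  | inr j => (c j, inr (rk [set j' | c j' == c j] j)) end.
exists F; split.
  apply: inj_card_bij; last by rewrite /TV /KV card_prod !card_sum !card_ord card_bool; lia.
  move=> [i|j] [i'|j'] //= [E1 E2]; congr (_ _).
    rewrite E1 in E2; apply: rk_inj E2; by rewrite ?ca ?inE ?E1.
  rewrite E1 in E2; apply: rk_inj E2; by rewrite ?cc ?inE ?E1.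
move=> [i|j] [i'|j']; rewrite /twoKnn_adj /= ?andbF ?andbT ?hx //.
  by rewrite negbK.
by rewrite negbK eq_sym.
Qed.

Lemma red_le n (col : coloring n) s : red_count col s <= 2 * n.
Proof. by have := max_card [set i | col i (s i)]; rewrite card_ord. Qed.

Lemma up n (col : coloring n) : balanced col -> forall m, (exists s, red_count col s = m) ->
  forall t, m + t <= 2 * n -> (exc col -> ~~ odd t) -> exists s, red_count col s = m + t.
Proof.
move=> hb m Pm; elim/ltn_ind => t IH Ht Hc.
case: t IH Ht Hc => [|[|t]] IH Ht Hc; first by rewrite addn0.
  have [s hs] := Pm.
  have lt : red_count col s < 2 * n by rewrite hs; lia.
  have [[s' hs']|[_ hE]] := step hb lt.
  - by exists s'; rewrite hs' hs addn1.
  - by have := Hc hE.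
have Ht' : m + t <= 2 * n by lia.
have Hc' : exc col -> ~~ odd t by move=> /Hc; rewrite !oddS negbK.
have [s hs] := IH t (ltnW (ltnSn _)) Ht' Hc'.
have lt : red_count col s < 2 * n by rewrite hs; lia.
have [[s1 hs1]|[[s2 hs2] _]] := step hb lt.
  have lt1 : red_count col s1 < 2 * n by rewrite hs1 hs; lia.
  have [[s3 hs3]|[_ hE]] := step hb lt1.
    by exists s3; rewrite hs3 hs1 hs; lia.
  have := exc_even hb hE s1; have := exc_even hb hE s; rewrite hs1 hs oddS.
  by case: (odd _).
by exists s2; rewrite hs2 hs; lia.
Qed.

Theorem theorem1 (n k : nat) (col : coloring n) :
  k <= 2 * n -> balanced col ->
  ((exists s : 'S_(2 * n), red_count col s = k /\ blue_count col s = 2 * n - k)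
   <-> ~ (odd k /\ blue_iso_twoKnn col)).
Proof.
move=> hk hb; split.
  move=> [s [hs _]] [ok hiso]; have := exc_even hb (iso_exc hiso) s.
  by rewrite hs ok.
move=> H.
suff [s hs] : exists s, red_count col s = k.
  by exists s; split => //; have := red_blue col s; rewrite hs; lia.
have Ek : exc col -> ~~ odd k.
  move=> he; apply/negP => ok; apply: H; split=> //; exact: exc_iso hb he.
have Em : exc col -> ~~ odd (red_count col 1%g) by move=> he; exact: exc_even hb he 1%g.
have P0 : exists s, red_count col s = red_count col 1%g by exists 1%g.
case: (leqP (red_count col 1%g) k) => hmk.
  have Ht : red_count col 1%g + (k - red_count col 1%g) <= 2 * n by rewrite subnKC.
  have Hc : exc col -> ~~ odd (k - red_count col 1%g).
    move=> he; rewrite oddB //; move: (Ek he) (Em he); by case: (odd k); case: (odd _).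
  have := up hb P0 Ht Hc; by rewrite subnKC.
have hbc := compl_bal hb.
have P1 : exists s, red_count (compl col) s = 2 * n - red_count col 1%g.
  by exists 1%g; rewrite red_compl.
have hm := red_le col 1%g.
have Ht : 2 * n - red_count col 1%g + (red_count col 1%g - k) <= 2 * n by lia.
have Hc : exc (compl col) -> ~~ odd (red_count col 1%g - k).
  move=> /exc_compl' he; rewrite oddB; last by lia.
  move: (Ek he) (Em he); by case: (odd k); case: (odd _).
have [s hs] := up hbc P1 Ht Hc.
exists s; have := red_le col s; move: hs; rewrite red_compl; lia.
Qed.
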